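(* Assume $\delta>d$, $\alpha=\gamma/(\delta-d)$, and that $f$ is not a polynomial product. Then on $\mathbb{C}^2\setminus B_f$ the limits $$G_z^\lambda(w)=\lim_{n\to\infty}\frac{1}{\delta^n}\log^+|Q_z^n(w)|,\qquad G_f(z,w)=\lim_{n\to\infty}\frac{1}{\delta^n}\log^+|f^n(z,w)|$$ exist and satisfy $G_z^\lambda(w)=\alpha G_p(z)$ and $G_f(z,w)=\max\{\alpha,1\}G_p(z)$, where $|(z,w)|=\max\{|z|,|w|\}$.
   Context: Let $p(z)=z^\delta+O(z^{\delta-1})$ be a monic polynomial of degree $\delta\ge 2$, and let $q(z,w)=b(z)w^d+(\text{terms of lower degree in } w)$ be a polynomial with $d=\deg_w q\ge 2$, where $b$ is a monic polynomial of degree $\gamma\ge 0$. Let $f(z,w)=(p(z),q(z,w))$; $f$ is a polynomial product if $q$ does not depend on $z$. Write $Q_z^n=q_{p^{n-1}(z)}\circ\cdots\circ q_{p(z)}\circ q_z$ with $q_z=q(z,\cdot)$, so $f^n(z,w)=(p^n(z),Q_z^n(w))$. Let $A_p=\{z: p^n(z)\to\infty\}$ and $G_p(z)=\lim_n\delta^{-n}\log^+|p^n(z)|$. For $\delta>d$, $\alpha=\max\{n_j/(\delta-m_j)\}$ over monomials $z^{n_j}w^{m_j}$ appearing in $q$ with nonzero coefficient. Let $W_R=\{(z,w):|z|>R,\ |w|>R|z|^\alpha\}$, fix $R$ large enough that $f(W_R)\subset W_R$ and $W_R\subset A_p\times\mathbb{C}$, set $A_f=\bigcup_{n\ge0}f^{-n}(W_R)$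 and $B_f=(A_p\times\mathbb{C})\setminus A_f$. *)

(* Defs.v *)
From Stdlib Require Import Reals List.
Open Scope R_scope.

Definition Cx : Type := (R * R)%type.
Definition C0 : Cx := (0, 0).
Definition C1 : Cx := (1, 0).
Definition Cadd (a b : Cx) : Cx := (fst a + fst b, snd a + snd b).
Definition Cmul (a b : Cx) : Cx :=
  (fst a * fst b - snd a * snd b, fst a * snd b + snd a * fst b).
Definition Cnorm (a : Cx) : R := sqrt (fst a * fst a + snd a * snd a).

(* [a0; a1; ...; ak] represents a0 + a1 X + ... + ak X^k *)
Fixpoint peval (l : list Cx) (z : Cx) : Cx :=
  match l with
  | nil => C0
  | a :: l' => Cadd a (Cmul z (peval l' z))
  end.

Definition monic_deg (l : list Cx) (deg : nat) : Prop :=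
  length l = S deg /\ nth deg l C0 = C1.

(* q : list (list Cx); the m-th entry is the polynomial c_m(z) (ascending). *)
Definition qeval (q : list (list Cx)) (z w : Cx) : Cx :=
  peval (map (fun c => peval c z) q) w.

(* coefficient of the monomial z^n w^m in q *)
Definition qcoef (q : list (list Cx)) (n m : nat) : Cx := nth n (nth m q nil) C0.

(* q(z,w) = b(z) w^d + lower order in w, with b monic of degree gamma, d = deg_w q *)
Definition q_shape (q : list (list Cx)) (d gamma : nat) : Prop :=
  length q = S d /\ monic_deg (nth d q nil) gamma.

Definition poly_product (q : list (list Cx)) : Prop :=
  exists g : Cx -> Cx, forall z w, qeval q z w = g w.

Definition is_alpha (q : list (list Cx)) (delta : nat) (a : R) : Prop :=
  (forall n m, qcoef q n m <> C0 -> INR n / (INR delta - INR m) <= a) /\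
  (exists n m, qcoef q n m <> C0 /\ a = INR n / (INR delta - INR m)).

Definition fmap (p : list Cx) (q : list (list Cx)) (zw : Cx * Cx) : Cx * Cx :=
  (peval p (fst zw), qeval q (fst zw) (snd zw)).

Fixpoint fiter (p : list Cx) (q : list (list Cx)) (n : nat) (zw : Cx * Cx) : Cx * Cx :=
  match n with
  | O => zw
  | S k => fmap p q (fiter p q k zw)
  end.

Fixpoint piter (p : list Cx) (n : nat) (z : Cx) : Cx :=
  match n with
  | O => z
  | S k => peval p (piter p k z)
  end.

Definition logp (x : R) : R := Rmax 0 (ln x).

Definition C2norm (zw : Cx * Cx) : R := Rmax (Cnorm (fst zw)) (Cnorm (snd zw)).

Definition A_p (p : list Cx) (z : Cx) : Prop :=
  forall M : R, exists N : nat, forall n, (N <= n)%nat -> M < Cnorm (piter p n z).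

Definition W_R (R0 alpha : R) (zw : Cx * Cx) : Prop :=
  R0 < Cnorm (fst zw) /\ R0 * Rpower (Cnorm (fst zw)) alpha < Cnorm (snd zw).

Definition A_f (p : list Cx) (q : list (list Cx)) (R0 alpha : R) (zw : Cx * Cx) : Prop :=
  exists n : nat, W_R R0 alpha (fiter p q n zw).

Definition B_f (p : list Cx) (q : list (list Cx)) (R0 alpha : R) (zw : Cx * Cx) : Prop :=
  A_p p (fst zw) /\ ~ A_f p q R0 alpha zw.

Definition Gp_seq (p : list Cx) (delta : nat) (z : Cx) (n : nat) : R :=
  logp (Cnorm (piter p n z)) / (INR delta ^ n).
Definition Gq_seq (p : list Cx) (q : list (list Cx)) (delta : nat) (zw : Cx * Cx) (n : nat) : R :=
  logp (Cnorm (snd (fiter p q n zw))) / (INR delta ^ n).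
Definition Gf_seq (p : list Cx) (q : list (list Cx)) (delta : nat) (zw : Cx * Cx) (n : nat) : R :=
  logp (C2norm (fiter p q n zw)) / (INR delta ^ n).

(* Main.v *)
Require Import Defs.
From Stdlib Require Import Reals List Lra Lia Classical.
From Coquelicot Require Complex.
Open Scope R_scope.

Lemma Cnorm_Cmod a : Cnorm a = Complex.Cmod a.
Proof. unfold Cnorm, Complex.Cmod. f_equal. simpl. ring. Qed.

Lemma Cnorm_add a b : Cnorm (Cadd a b) <= Cnorm a + Cnorm b.
Proof. rewrite !Cnorm_Cmod. apply (Complex.Cmod_triangle a b). Qed.

Lemma Cnorm_mul a b : Cnorm (Cmul a b) = Cnorm a * Cnorm b.
Proof. rewrite !Cnorm_Cmod. apply (Complex.Cmod_mult a b). Qed.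

Lemma Cnorm_ge0 a : 0 <= Cnorm a.
Proof. unfold Cnorm. apply sqrt_pos. Qed.

Lemma Cnorm_C1 : Cnorm Defs.C1 = 1.
Proof. rewrite Cnorm_Cmod. apply Complex.Cmod_1. Qed.

Lemma Cnorm_C0 : Cnorm C0 = 0.
Proof. rewrite Cnorm_Cmod. apply Complex.Cmod_0. Qed.

Lemma Cnorm_rev a b : Cnorm b - Cnorm a <= Cnorm (Cadd a b).
Proof.
  rewrite !Cnorm_Cmod.
  assert (Hb : b = Complex.Cplus (Cadd a b) (Complex.Copp a)).
  { destruct a, b; unfold Complex.Cplus, Cadd, Complex.Copp; simpl; f_equal; ring. }
  pose proof (Complex.Cmod_triangle (Cadd a b) (Complex.Copp a)). rewrite Complex.Cmod_opp in H.
  rewrite <- Hb in H. lra.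
Qed.

Fixpoint Cpow (z : Cx) (n : nat) : Cx :=
  match n with O => Defs.C1 | S k => Cmul z (Cpow z k) end.

Lemma Cnorm_pow z n : Cnorm (Cpow z n) = Cnorm z ^ n.
Proof. induction n; simpl. apply Cnorm_C1. rewrite Cnorm_mul, IHn. ring. Qed.

Lemma peval_app l a z :
  peval (l ++ a :: nil) z = Cadd (peval l z) (Cmul (Cpow z (length l)) a).
Proof.
  induction l as [|b l IH]; simpl.
  - destruct a, z; unfold Cadd, Cmul, C0, Defs.C1; simpl; f_equal; ring.
  - rewrite IH. destruct a, b, z, (peval l (r1, r2)), (Cpow (r1,r2) (length l)).
    unfold Cadd, Cmul; simpl; f_equal; ring.
Qed.

Fixpoint normsum (l : list Cx) : R :=
  match l with nil => 0 | a :: l' => Cnorm a + normsum l' end.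

Lemma normsum_ge0 l : 0 <= normsum l.
Proof. induction l; simpl. lra. pose proof (Cnorm_ge0 a). lra. Qed.

Lemma peval_bound l z c K : 0 <= c -> 0 <= K ->
  (forall i, nth i l C0 <> C0 -> c * Cnorm z ^ i <= K) ->
  c * Cnorm (peval l z) <= normsum l * K.
Proof.
  revert c. induction l as [|a l IH]; intros c Hc HK H; simpl.
  - rewrite Cnorm_C0. lra.
  - pose proof (Cnorm_add a (Cmul z (peval l z))). rewrite Cnorm_mul in H0.
    assert (H1 : c * Cnorm a <= Cnorm a * K).
    { destruct (classic (a = C0)) as [->|Ha].
      - rewrite Cnorm_C0. lra.
      - specialize (H O Ha). simpl in H. pose proof (Cnorm_ge0 a). nra. }
    assert (H2 : (c * Cnorm z) * Cnorm (peval l z) <= normsum l * K).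
    { apply IH. pose proof (Cnorm_ge0 z). nra. exact HK.
      intros i Hi. specialize (H (S i) Hi). simpl in H. lra. }
    pose proof (Cnorm_ge0 a). nra.
Qed.

Fixpoint qtotal (q : list (list Cx)) : R :=
  match q with nil => 0 | l :: q' => normsum l + qtotal q' end.

Lemma qtotal_ge0 q : 0 <= qtotal q.
Proof. induction q; simpl. lra. pose proof (normsum_ge0 a). lra. Qed.

Lemma qeval_bound q z w c K : 0 <= c -> 0 <= K ->
  (forall n m, qcoef q n m <> C0 -> c * Cnorm w ^ m * Cnorm z ^ n <= K) ->
  c * Cnorm (qeval q z w) <= qtotal q * K.
Proof.
  unfold qeval, qcoef. revert c. induction q as [|l q IH]; intros c Hc HK H; simpl.
  - rewrite Cnorm_C0. lra.
  - pose proof (Cnorm_add (peval l z) (Cmul w (peval (map (fun c0 => peval c0 z) q) w))).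
    rewrite Cnorm_mul in H0.
    assert (H1 : c * Cnorm (peval l z) <= normsum l * K).
    { apply peval_bound; auto. intros i Hi. specialize (H i O Hi). simpl in H. lra. }
    assert (H2 : (c * Cnorm w) * Cnorm (peval (map (fun c0 => peval c0 z) q) w) <= qtotal q * K).
    { apply IH. pose proof (Cnorm_ge0 w). nra. exact HK.
      intros n m Hi. specialize (H n (S m) Hi). simpl in H. lra. }
    nra.
Qed.

Lemma monic_split p D : monic_deg p D -> p = firstn D p ++ Defs.C1 :: nil.
Proof.
  intros [Hl Hn]. rewrite <- (firstn_skipn D p) at 1. f_equal.
  assert (Hs : length (skipn D p) = 1%nat) by (rewrite length_skipn; lia).
  assert (Hn' : nth 0 (skipn D p) C0 = Defs.C1) by (rewrite nth_skipn, Nat.add_0_r; exact Hn).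
  destruct (skipn D p) as [|x [|y r]]; simpl in *; try lia. subst; reflexivity.
Qed.

Lemma p_est p D : (1 <= D)%nat -> monic_deg p D -> exists A, 0 <= A /\
  forall z, 1 <= Cnorm z ->
    Cnorm z ^ D - A * Cnorm z ^ (D - 1) <= Cnorm (peval p z) /\
    Cnorm (peval p z) <= Cnorm z ^ D + A * Cnorm z ^ (D - 1).
Proof.
  intros HD Hm. pose proof (monic_split p D Hm) as Hs.
  set (l := firstn D p) in Hs.
  assert (Hll : length l = D) by (unfold l; rewrite length_firstn; destruct Hm; lia).
  exists (normsum l). split. apply normsum_ge0.
  intros z Hz. rewrite Hs, peval_app, Hll.
  assert (Hb : 1 * Cnorm (peval l z) <= normsum l * Cnorm z ^ (D - 1)).
  { apply peval_bound. lra. apply pow_le; lra.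
    intros i Hi. rewrite Rmult_1_l. apply Rle_pow. exact Hz.
    destruct (Compare_dec.le_lt_dec D i) as [Hle|Hlt].
    - exfalso. apply Hi. apply nth_overflow. lia.
    - lia. }
  pose proof (Cnorm_add (peval l z) (Cmul (Cpow z D) Defs.C1)).
  pose proof (Cnorm_rev (peval l z) (Cmul (Cpow z D) Defs.C1)).
  rewrite Cnorm_mul, Cnorm_pow, Cnorm_C1, Rmult_1_r in H, H0. lra.
Qed.

Lemma pow_pred x D : (1 <= D)%nat -> x ^ D = x * x ^ (D - 1).
Proof. intros. destruct D. lia. simpl. rewrite Nat.sub_0_r. reflexivity. Qed.

Lemma p_est2 p D : (2 <= D)%nat -> monic_deg p D -> exists R1, 4 <= R1 /\
  forall z, R1 <= Cnorm z ->
    Cnorm z ^ D / 2 <= Cnorm (peval p z) /\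
    Cnorm (peval p z) <= 2 * Cnorm z ^ D /\
    2 * Cnorm z <= Cnorm (peval p z).
Proof.
  intros HD Hm. destruct (p_est p D ltac:(lia) Hm) as [A [HA H]].
  exists (Rmax 4 (2 * A)). split. apply Rmax_l. intros z Hz.
  pose proof (Rmax_l 4 (2*A)) as M1. pose proof (Rmax_r 4 (2*A)) as M2.
  destruct (H z ltac:(lra)) as [H1 H2].
  rewrite (pow_pred _ D) in * by lia.
  assert (Hy : Cnorm z <= Cnorm z ^ (D - 1)).
  { replace (D - 1)%nat with (S (D - 2)) by lia. simpl.
    rewrite <- (Rmult_1_r (Cnorm z)) at 1. apply Rmult_le_compat_l. lra.
    apply pow_R1_Rle. lra. }
  nra.
Qed.

Lemma Rdiv_le_0_compat x y : 0 <= x -> 0 < y -> 0 <= x / y.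
Proof. intros. unfold Rdiv. apply Rmult_le_pos; auto. left; apply Rinv_0_lt_compat; auto. Qed.
Lemma Rdiv_lt_1' x y : 0 < y -> x < y -> x / y < 1.
Proof. intros. apply Rmult_lt_reg_r with y; auto. unfold Rdiv. rewrite Rmult_assoc, Rinv_l; lra. Qed.
Lemma Rabs_def2b x a : Rabs x <= a -> - a <= x <= a.
Proof. unfold Rabs; destruct Rcase_abs; lra. Qed.

Lemma cv_shift u M l : Un_cv (fun k => u (k + M)%nat) l -> Un_cv u l.
Proof.
  intros H e He. destruct (H e He) as [N HN]. exists (N + M)%nat. intros n Hn.
  replace n with ((n - M) + M)%nat by lia. apply HN. lia.
Qed.

Lemma cv_ext u v l : (forall k, u k = v k) -> Un_cv u l -> Un_cv v l.
Proof. intros E H e He. destruct (H e He) as [N HN]. exists N. intros. rewrite <- E. auto. Qed.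

Lemma cv_const c : Un_cv (fun _ => c) c.
Proof. intros e He. exists O. intros. unfold Rdist. rewrite Rminus_diag, Rabs_R0. lra. Qed.

Lemma cv_scal u l c : Un_cv u l -> Un_cv (fun k => c * u k) (c * l).
Proof. intros. apply CV_mult. apply cv_const. auto. Qed.

Lemma cv_max u v l m : Un_cv u l -> Un_cv v m -> Un_cv (fun k => Rmax (u k) (v k)) (Rmax l m).
Proof.
  intros Hu Hv e He. destruct (Hu e He) as [N1 H1]. destruct (Hv e He) as [N2 H2].
  exists (N1 + N2)%nat. intros n Hn. specialize (H1 n ltac:(lia)). specialize (H2 n ltac:(lia)).
  unfold Rdist in *. unfold Rmax. repeat destruct Rle_dec;
  apply Rabs_def2 in H1; apply Rabs_def2 in H2; apply Rabs_def1; lra.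
Qed.

Lemma cv_squeeze0 u v : Un_cv v 0 -> (forall k, Rabs (u k) <= v k) -> Un_cv u 0.
Proof.
  intros Hv Hb e He. destruct (Hv e He) as [N HN]. exists N. intros n Hn.
  specialize (HN n Hn). unfold Rdist in *. rewrite Rminus_0_r in *.
  pose proof (Rle_abs (v n)). specialize (Hb n). lra.
Qed.

Lemma cv_geo r : 0 <= r < 1 -> Un_cv (fun k => r ^ k) 0.
Proof.
  intros Hr e He. destruct (pow_lt_1_zero r ltac:(rewrite Rabs_right; lra) e He) as [N HN].
  exists N. intros n Hn. unfold Rdist. rewrite Rminus_0_r. auto.
Qed.

Lemma lin_rec (v : nat -> R) K d : 0 <= K -> 2 <= d ->
  (forall k, v (S k) <= K + d * v k) -> (forall k, 0 <= v k) ->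
  forall k, v k + K <= d ^ k * (v O + K).
Proof.
  intros HK Hd Hr Hp k. induction k; simpl. lra.
  specialize (Hr k). specialize (Hp k). nra.
Qed.

Lemma lin_rec_cv (v : nat -> R) K d D : 0 <= K -> 2 <= d -> d < D ->
  (forall k, v (S k) <= K + d * v k) -> (forall k, 0 <= v k) ->
  Un_cv (fun k => v k / D ^ k) 0.
Proof.
  intros HK Hd HdD Hr Hp.
  apply cv_squeeze0 with (fun k => (v O + K) * (d / D) ^ k).
  - replace 0 with ((v O + K) * 0) by ring. apply cv_scal. apply cv_geo.
    split. apply Rdiv_le_0_compat; lra. apply Rdiv_lt_1'; lra.
  - intros k. pose proof (lin_rec v K d HK Hd Hr Hp k).
    assert (HD : 0 < D ^ k) by (apply pow_lt; lra).
    rewrite Rabs_right. 2:{ apply Rle_ge, Rdiv_le_0_compat; auto. }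
    unfold Rdiv. rewrite Rpow_mult_distr, pow_inv.
    apply Rmult_le_reg_r with (D ^ k). auto.
    rewrite Rmult_assoc, Rinv_l by lra.
    replace ((v 0%nat + K) * (d ^ k * / D ^ k) * D ^ k) with ((v 0%nat + K) * d ^ k)
      by (field; lra). specialize (Hp k). nra.
Qed.

Lemma log_cv (L : nat -> R) D c : 1 < D -> 0 <= c ->
  (forall k, Rabs (L (S k) - D * L k) <= c) ->
  exists l, Un_cv (fun k => L k / D ^ k) l.
Proof.
  intros HD Hc H. set (c' := c / (D - 1)).
  set (a := fun k => L k / D ^ k).
  assert (Hpos : forall k, 0 < D ^ k) by (intros; apply pow_lt; lra).
  assert (Hstep : forall k, Rabs (a (S k) - a k) <= c / D ^ (S k)).
  { intros k. unfold a. specialize (H k). simpl.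
    replace (L (S k) / (D * D ^ k) - L k / D ^ k) with ((L (S k) - D * L k) / (D * D ^ k))
      by (field; split; [apply Rgt_not_eq, Hpos|lra]).
    unfold Rdiv. rewrite Rabs_mult, Rabs_inv, (Rabs_right (D * D ^ k)).
    apply Rmult_le_compat_r. apply Rlt_le, Rinv_0_lt_compat.
    specialize (Hpos k); nra. auto. specialize (Hpos k); nra. }
  assert (Hc' : c + c' = c' * D) by (unfold c'; field; lra).
  set (b := fun k => a k - c' / D ^ k).
  set (e := fun k => a k + c' / D ^ k).
  assert (Hb : Un_growing b).
  { intros k. unfold b. specialize (Hstep k). apply Rabs_def2b in Hstep.
    simpl in *. assert (c' / (D * D ^ k) * D = c' / D ^ k) by (field; split; [apply Rgt_not_eq, Hpos|lra]).
    assert (c / (D * D ^ k) + c' / (D * D ^ k) = c' / D ^ k).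
    { rewrite <- H0. unfold Rdiv. rewrite <- Rmult_plus_distr_r, Hc'. field; split; [apply Rgt_not_eq, Hpos|lra]. }
    lra. }
  assert (He : forall k, e k <= e O).
  { intros k; induction k. lra. eapply Rle_trans. 2: exact IHk. unfold e.
    specialize (Hstep k). apply Rabs_def2b in Hstep. simpl in *.
    assert (c' / (D * D ^ k) * D = c' / D ^ k) by (field; split; [apply Rgt_not_eq, Hpos|lra]).
    assert (c / (D * D ^ k) + c' / (D * D ^ k) = c' / D ^ k).
    { rewrite <- H0. unfold Rdiv. rewrite <- Rmult_plus_distr_r, Hc'. field; split; [apply Rgt_not_eq, Hpos|lra]. }
    lra. }
  assert (Hub : has_ub b).
  { exists (e O). intros x [k ->]. specialize (He k). unfold b, e in *.
    assert (0 <= c' / D ^ k). { apply Rdiv_le_0_compat. unfold c'. apply Rdiv_le_0_compat; lra. auto. }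
    lra. }
  destruct (growing_cv b Hb Hub) as [l Hl]. exists l.
  apply cv_ext with (fun k => b k + c' * (/ D) ^ k).
  { intros k. unfold b, a. rewrite pow_inv. field. apply Rgt_not_eq, Hpos. }
  replace l with (l + c' * 0) by ring. apply CV_plus. auto. apply cv_scal. apply cv_geo.
  split. apply Rlt_le, Rinv_0_lt_compat; lra. rewrite <- Rinv_1. apply Rinv_lt_contravar; lra.
Qed.

Lemma ln_le' x y : 0 < x -> x <= y -> ln x <= ln y.
Proof. intros. destruct (Req_dec x y). subst; lra. left; apply ln_increasing; lra. Qed.
Lemma exp_le' x y : x <= y -> exp x <= exp y.
Proof. intros. destruct (Req_dec x y). subst; lra. left; apply exp_increasing; lra. Qed.
Lemma exp_pow' x n : exp x ^ n = exp (INR n * x).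
Proof. rewrite <- (Rpower_pow n (exp x) (exp_pos x)). unfold Rpower. rewrite ln_exp. reflexivity. Qed.
Lemma ln_nonpos x : x <= 0 -> ln x = 0.
Proof. intros. unfold ln. destruct Rlt_dec; [exfalso; lra|reflexivity]. Qed.

Lemma logp_le x y : 0 <= y -> x <= exp y -> logp x <= y.
Proof.
  intros Hy H. unfold logp. apply Rmax_lub. auto.
  destruct (Rlt_dec 0 x). rewrite <- (ln_exp y). apply ln_le'; auto. rewrite ln_nonpos; lra.
Qed.
Lemma logp_ge0 x : 0 <= logp x.
Proof. apply Rmax_l. Qed.
Lemma le_exp_logp x : x <= exp (logp x).
Proof.
  destruct (Rlt_dec 0 x). rewrite <- (exp_ln x) at 1 by auto. apply exp_le'. apply Rmax_r.
  pose proof (exp_pos (logp x)). lra.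
Qed.
Lemma logp_mono a b : 0 <= b <= a -> logp b <= logp a.
Proof.
  intros H. unfold logp. destruct (Rlt_dec 0 b).
  - apply Rle_max_compat_l. apply ln_le'; lra.
  - rewrite (ln_nonpos b) by lra. apply Rmax_lub. apply Rmax_l. apply Rmax_l.
Qed.
Lemma logp_max a b : 0 <= a -> 0 <= b -> logp (Rmax a b) = Rmax (logp a) (logp b).
Proof.
  intros. unfold Rmax at 1. destruct Rle_dec.
  - rewrite Rmax_right. auto. apply logp_mono; lra.
  - rewrite Rmax_left. auto. apply logp_mono; lra.
Qed.
Lemma Rmax_div a b c : 0 < c -> Rmax a b / c = Rmax (a / c) (b / c).
Proof.
  intros. unfold Rmax. destruct Rle_dec, Rle_dec; auto.
  - exfalso. apply n. unfold Rdiv. apply Rmult_le_compat_r; auto. left; apply Rinv_0_lt_compat; auto.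
  - exfalso. apply n. apply Rmult_le_reg_r with (/ c). apply Rinv_0_lt_compat; auto. auto.
Qed.

Lemma fst_fiter p q n zw : fst (fiter p q n zw) = piter p n (fst zw).
Proof. induction n; simpl; auto. rewrite IHn. reflexivity. Qed.
Lemma fiter_add p q k M zw : fiter p q (k + M) zw = fiter p q k (fiter p q M zw).
Proof. induction k; simpl; auto. rewrite IHk. reflexivity. Qed.
Lemma piter_add p k M z : piter p (k + M) z = piter p k (piter p M z).
Proof. induction k; simpl; auto. rewrite IHk. reflexivity. Qed.

Lemma A_p_shift p M z : A_p p (piter p M z) -> A_p p z.
Proof.
  intros H B. destruct (H B) as [N HN]. exists (N + M)%nat. intros n Hn.
  replace n with ((n - M) + M)%nat by lia. rewrite piter_add. apply HN. lia.
Qed.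

Lemma pow2_ge n : INR n <= 2 ^ n.
Proof. induction n. simpl; lra. rewrite S_INR. simpl. pose proof (pow_R1_Rle 2 n). lra. Qed.

Section Esc.
Variables (p : list Cx) (R1 : R).
Hypothesis HR1 : 4 <= R1.
Hypothesis Hesc : forall z, R1 <= Cnorm z -> 2 * Cnorm z <= Cnorm (peval p z).

Lemma escape_iter z : R1 <= Cnorm z -> forall k, 2 ^ k * Cnorm z <= Cnorm (piter p k z).
Proof.
  intros Hz k. induction k; simpl. lra.
  assert (R1 <= Cnorm (piter p k z)) by (pose proof (pow_R1_Rle 2 k); nra).
  specialize (Hesc _ H). lra.
Qed.

Lemma escape z : R1 <= Cnorm z -> A_p p z.
Proof.
  intros Hz B. destruct (INR_unbounded B) as [N HN]. exists N. intros n Hn.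
  pose proof (escape_iter z Hz n). pose proof (pow2_ge n). apply le_INR in Hn.
  assert (2 ^ n <= 2 ^ n * Cnorm z). { rewrite <- (Rmult_1_r (2^n)) at 1. apply Rmult_le_compat_l. apply pow_le; lra. lra. }
  lra.
Qed.

Lemma not_Ap_bounded z : ~ A_p p z -> forall k, Cnorm (piter p k z) < R1.
Proof.
  intros H k. destruct (Rlt_dec (Cnorm (piter p k z)) R1) as [h|h]; auto.
  exfalso. apply H. apply A_p_shift with k. apply escape. lra.
Qed.
End Esc.

Lemma cv_ge0 u l : (forall k, 0 <= u k) -> Un_cv u l -> 0 <= l.
Proof.
  intros H Hc. destruct (Rle_dec 0 l) as [h|h]; auto. exfalso.
  destruct (Hc (- l) ltac:(lra)) as [N HN]. specialize (HN N (le_n N)). specialize (H N).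
  unfold Rdist in HN. rewrite Rabs_right in HN; lra.
Qed.

Section Core.
Variables (p : list Cx) (q : list (list Cx)) (delta d gamma : nat) (alpha R0 R1 : R).
Hypothesis Hdelta : (2 <= delta)%nat.
Hypothesis Hd : (2 <= d)%nat.
Hypothesis Hq : q_shape q d gamma.
Hypothesis Hdd : (d < delta)%nat.
Hypothesis Halpha : is_alpha q delta alpha.
Hypothesis HR : 0 < R0.
Hypothesis HR1 : 4 <= R1.
Hypothesis Hpe : forall z, R1 <= Cnorm z ->
    Cnorm z ^ delta / 2 <= Cnorm (peval p z) /\
    Cnorm (peval p z) <= 2 * Cnorm z ^ delta /\
    2 * Cnorm z <= Cnorm (peval p z).

Lemma coef_facts n m : qcoef q n m <> C0 -> (m <= d)%nat /\ INR n <= alpha * (INR delta - INR m).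
Proof.
  intros H. assert (Hm : (m <= d)%nat).
  { destruct (Compare_dec.le_lt_dec m d) as [h|h]; auto. exfalso. apply H. unfold qcoef.
    rewrite (nth_overflow q nil) by (destruct Hq; lia). destruct n; reflexivity. }
  split; auto. destruct Halpha as [H1 _]. specialize (H1 n m H).
  assert (INR m < INR delta) by (apply lt_INR; lia).
  apply Rmult_le_reg_r with (/ (INR delta - INR m)). apply Rinv_0_lt_compat; lra.
  rewrite Rmult_assoc, Rinv_r by lra. rewrite Rmult_1_r. exact H1.
Qed.

Lemma alpha_ge0 : 0 <= alpha.
Proof.
  destruct Halpha as [_ [n [m [Hc Ha]]]]. destruct (coef_facts n m Hc) as [Hm _]. rewrite Ha.
  assert (INR m < INR delta) by (apply lt_INR; lia).
  apply Rdiv_le_0_compat. apply pos_INR. lra.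
Qed.

Lemma term_bound n m z w L u : 0 <= L -> Cnorm z <= exp L -> Cnorm w <= exp (u + alpha * L) ->
  (m <= d)%nat -> INR n <= alpha * (INR delta - INR m) ->
  Cnorm w ^ m * Cnorm z ^ n <= exp (alpha * INR delta * L + INR d * Rmax u 0).
Proof.
  intros HL Hz Hw Hm Hn.
  assert (H1 : Cnorm w ^ m <= exp (u + alpha * L) ^ m) by (apply pow_incr; split; [apply Cnorm_ge0|auto]).
  assert (H2 : Cnorm z ^ n <= exp L ^ n) by (apply pow_incr; split; [apply Cnorm_ge0|auto]).
  rewrite exp_pow' in H1, H2.
  eapply Rle_trans. apply Rmult_le_compat; try apply pow_le; try apply Cnorm_ge0; eauto.
  rewrite <- exp_plus. apply exp_le'.
  pose proof alpha_ge0. pose proof (Rmax_l u 0). pose proof (Rmax_r u 0).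
  assert (INR m <= INR d) by (apply le_INR; auto). pose proof (pos_INR m).
  assert (INR m * u <= INR d * Rmax u 0) by nra.
  assert ((alpha * INR m + INR n) * L <= alpha * INR delta * L) by nra.
  nra.
Qed.

Definition S1 := qtotal q + 1.

Lemma S1_ge1 : 1 <= S1.
Proof. unfold S1. pose proof (qtotal_ge0 q). lra. Qed.

Lemma q_bound z w L u : 0 <= L -> Cnorm z <= exp L -> Cnorm w <= exp (u + alpha * L) ->
  Cnorm (qeval q z w) <= S1 * exp (alpha * INR delta * L + INR d * Rmax u 0).
Proof.
  intros HL Hz Hw.
  pose proof (qeval_bound q z w 1 (exp (alpha * INR delta * L + INR d * Rmax u 0))) as H.
  rewrite Rmult_1_l in H. eapply Rle_trans. apply H. lra. left; apply exp_pos.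
  intros n m Hc. rewrite Rmult_1_l. destruct (coef_facts n m Hc).
  apply term_bound; auto.
  unfold S1. pose proof (exp_pos (alpha * INR delta * L + INR d * Rmax u 0)). lra.
Qed.

Lemma coreB zw : (forall k, Cnorm (piter p k (fst zw)) < R1) ->
  Un_cv (Gp_seq p delta (fst zw)) 0 /\ Un_cv (Gq_seq p q delta zw) 0.
Proof.
  intros Hb. assert (HD : 2 <= INR delta) by (apply (le_INR 2); lia).
  split.
  - apply cv_squeeze0 with (fun k => logp R1 * (/ INR delta) ^ k).
    + replace 0 with (logp R1 * 0) by ring. apply cv_scal. apply cv_geo. split.
      left; apply Rinv_0_lt_compat; lra. rewrite <- Rinv_1. apply Rinv_lt_contravar; lra.
    + intros k. unfold Gp_seq. rewrite pow_inv. assert (0 < INR delta ^ k) by (apply pow_lt; lra).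
      rewrite Rabs_right. 2:{ apply Rle_ge, Rdiv_le_0_compat. apply logp_ge0. auto. }
      unfold Rdiv. apply Rmult_le_compat_r. left; apply Rinv_0_lt_compat; auto.
      apply logp_mono. split. apply Cnorm_ge0. left; apply Hb.
  - set (L := ln R1).
    assert (HL : 0 <= L). { unfold L. rewrite <- ln_1. apply ln_le'; lra. }
    set (K := ln S1 + alpha * INR delta * L).
    assert (HK : 0 <= K).
    { unfold K. pose proof S1_ge1. pose proof alpha_ge0. assert (0 <= ln S1) by (rewrite <- ln_1; apply ln_le'; lra).
      assert (0 <= INR delta) by apply pos_INR. assert (0 <= alpha * INR delta) by nra. nra. }
    apply (lin_rec_cv (fun k => logp (Cnorm (snd (fiter p q k zw)))) K (INR d) (INR delta) HK).
    + apply (le_INR 2); lia.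
    + apply lt_INR; lia.
    + intros k. simpl. apply logp_le.
      { pose proof (logp_ge0 (Cnorm (snd (fiter p q k zw)))). assert (0 <= INR d) by apply pos_INR. nra. }
      set (w := snd (fiter p q k zw)). set (z := fst (fiter p q k zw)).
      assert (Hz : Cnorm z <= exp L).
      { unfold L. rewrite exp_ln by lra. unfold z. rewrite fst_fiter. left; apply Hb. }
      assert (Hw : Cnorm w <= exp (logp (Cnorm w) + alpha * L)).
      { eapply Rle_trans. apply le_exp_logp. apply exp_le'. pose proof alpha_ge0. nra. }
      pose proof (q_bound z w L (logp (Cnorm w)) HL Hz Hw).
      rewrite Rmax_left in H by apply logp_ge0.
      eapply Rle_trans. apply H. unfold K. rewrite Rplus_assoc, (exp_plus (ln S1)), exp_ln. lra.
      pose proof S1_ge1; lra.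
    + intros; apply logp_ge0.
Qed.

Lemma ln_half_le x : 0 < x -> ln (x / 2) = ln x - ln 2.
Proof. intros. unfold Rdiv. rewrite ln_mult, ln_Rinv; lra. Qed.

Lemma coreW zw1 : (forall k, W_R R0 alpha (fiter p q k zw1)) ->
  (forall k, R1 <= Cnorm (fst (fiter p q k zw1))) ->
  exists g1, 0 <= g1 /\ Un_cv (Gp_seq p delta (fst zw1)) g1 /\
    Un_cv (Gq_seq p q delta zw1) (alpha * g1).
Proof.
  intros HW HZ.
  assert (HD : 2 <= INR delta) by (apply (le_INR 2); lia).
  assert (HDp : forall k, 0 < INR delta ^ k) by (intros; apply pow_lt; lra).
  set (z := fun k => fst (fiter p q k zw1)).
  set (w := fun k => snd (fiter p q k zw1)).
  assert (Hzpos : forall k, 0 < Cnorm (z k)) by (intros k; specialize (HZ k); unfold z; lra).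
  assert (Hwpos : forall k, 0 < Cnorm (w k)).
  { intros k. destruct (HW k) as [_ H]. unfold w.
    assert (0 < R0 * Rpower (Cnorm (fst (fiter p q k zw1))) alpha).
    { apply Rmult_lt_0_compat; auto. unfold Rpower; apply exp_pos. } lra. }
  set (L := fun k => ln (Cnorm (z k))).
  assert (HL0 : forall k, 0 <= L k).
  { intros k. unfold L. rewrite <- ln_1. apply ln_le'. lra. specialize (HZ k). unfold z. lra. }
  assert (Hln2 : 0 < ln 2) by (pose proof ln_lt_2; lra).
  assert (Hstep : forall k, Rabs (L (S k) - INR delta * L k) <= ln 2 /\
                   INR delta * L k - ln 2 <= L (S k)).
  { intros k. destruct (Hpe (z k) (HZ k)) as [H1 [H2 _]].
    unfold L. change (z (S k)) with (peval p (z k)).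
    assert (0 < Cnorm (z k) ^ delta) by (apply pow_lt; auto).
    apply ln_le' in H1. 2: lra. apply ln_le' in H2. 2:{ specialize (Hzpos (S k)). exact Hzpos. }
    rewrite ln_half_le in H1 by auto. rewrite ln_mult, ln_pow in H2 by (auto; lra).
    rewrite ln_pow in H1 by auto. split. apply Rabs_le; lra. lra. }
  destruct (log_cv L (INR delta) (ln 2) ltac:(lra) ltac:(lra) (fun k => proj1 (Hstep k))) as [g1 Hg1].
  assert (Hg0 : 0 <= g1).
  { apply cv_ge0 with (fun k => L k / INR delta ^ k); auto. intros k. apply Rdiv_le_0_compat; auto. }
  exists g1. split; auto.
  pose proof alpha_ge0 as Ha.
  set (u := fun k => ln (Cnorm (w k)) - alpha * L k).
  assert (Hulow : forall k, ln R0 <= u k).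
  { intros k. destruct (HW k) as [_ H]. unfold u, L, z, w.
    assert (0 < Rpower (Cnorm (fst (fiter p q k zw1))) alpha) by (unfold Rpower; apply exp_pos).
    apply Rlt_le, ln_le' in H. 2:{ apply Rmult_lt_0_compat; auto. }
    rewrite ln_mult, ln_Rpower in H by auto. lra. }
  set (K0 := ln S1 + alpha * ln 2).
  assert (HK0 : 0 <= K0).
  { unfold K0. pose proof S1_ge1. assert (0 <= ln S1) by (rewrite <- ln_1; apply ln_le'; lra). nra. }
  assert (Hustep : forall k, u (S k) <= K0 + INR d * Rmax (u k) 0).
  { intros k.
    assert (Hz : Cnorm (z k) <= exp (L k)) by (unfold L; rewrite exp_ln; auto; lra).
    assert (Hw : Cnorm (w k) <= exp (u k + alpha * L k)).
    { unfold u. replace (ln (Cnorm (w k)) - alpha * L k + alpha * L k) with (ln (Cnorm (w k))) by ring.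
      rewrite exp_ln; auto; lra. }
    pose proof (q_bound (z k) (w k) (L k) (u k) (HL0 k) Hz Hw) as Hq1.
    change (qeval q (z k) (w k)) with (w (S k)) in Hq1.
    apply ln_le' in Hq1. 2: apply Hwpos.
    pose proof S1_ge1.
    rewrite ln_mult, ln_exp in Hq1 by (try apply exp_pos; lra).
    destruct (Hstep k) as [_ Hs].
    change (u (S k)) with (ln (Cnorm (w (S k))) - alpha * L (S k)). assert (alpha * (INR delta * L k - ln 2) <= alpha * L (S k)) by (apply Rmult_le_compat_l; auto). unfold K0. lra. }
  set (v := fun k => Rmax (u k) 0).
  assert (Hv : Un_cv (fun k => v k / INR delta ^ k) 0).
  { apply (lin_rec_cv v K0 (INR d) (INR delta) HK0).
    apply (le_INR 2); lia. apply lt_INR; lia.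
    intros k. unfold v at 1. apply Rmax_lub. apply Hustep.
    assert (0 <= INR d) by apply pos_INR. pose proof (Rmax_r (u k) 0). fold (v k) in H0. nra.
    intros k. apply Rmax_r. }
  assert (Hu : Un_cv (fun k => u k / INR delta ^ k) 0).
  { apply cv_squeeze0 with (fun k => v k / INR delta ^ k + Rabs (ln R0) * (/ INR delta) ^ k).
    - replace 0 with (0 + Rabs (ln R0) * 0) by ring. apply CV_plus. auto. apply cv_scal. apply cv_geo.
      split. left; apply Rinv_0_lt_compat; lra. rewrite <- Rinv_1. apply Rinv_lt_contravar; lra.
    - intros k. rewrite pow_inv. unfold Rdiv. rewrite Rabs_mult, (Rabs_right (/ _)).
      2:{ left; apply Rinv_0_lt_compat; auto. }
      assert (Hi : 0 < / INR delta ^ k) by (apply Rinv_0_lt_compat; auto).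
      assert (Rabs (u k) <= v k + Rabs (ln R0)).
      { specialize (Hulow k). pose proof (Rmax_l (u k) 0). pose proof (Rmax_r (u k) 0).
        unfold v. unfold Rabs at 1 2. repeat destruct Rcase_abs; lra. }
      nra. }
  split.
  - apply cv_ext with (fun k => L k / INR delta ^ k); auto.
    intros k. unfold Gp_seq, logp. rewrite <- (fst_fiter p q k zw1). fold (z k). fold (L k).
    rewrite Rmax_right; auto.
  - apply cv_ext with (fun k => Rmax (0 / INR delta ^ k) ((u k + alpha * L k) / INR delta ^ k)).
    { intros k. unfold Gq_seq, logp. rewrite Rmax_div by auto. fold (w k). unfold u. f_equal. f_equal. ring. }
    replace (alpha * g1) with (Rmax 0 (0 + alpha * g1)).
    2:{ rewrite Rplus_0_l, Rmax_right; auto. nra. }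
    apply cv_max.
    + apply cv_ext with (fun _ => 0). intros; unfold Rdiv; ring. apply cv_const.
    + apply cv_ext with (fun k => u k / INR delta ^ k + alpha * (L k / INR delta ^ k)).
      intros k. field. apply Rgt_not_eq, HDp.
      apply CV_plus. auto. apply cv_scal. auto.
Qed.
End Core.

Theorem corollary4p10
  (p : list Cx) (q : list (list Cx)) (delta d gamma : nat) (alpha R0 : R)
  (Hdelta : (2 <= delta)%nat) (Hp : monic_deg p delta)
  (Hd : (2 <= d)%nat) (Hq : q_shape q d gamma)
  (Hdd : (d < delta)%nat)
  (Halpha : is_alpha q delta alpha)
  (Halpha_eq : alpha = INR gamma / (INR delta - INR d))
  (Hnpp : ~ poly_product q)
  (HR : 0 < R0)
  (HWinv : forall zw, W_R R0 alpha zw -> W_R R0 alpha (fmap p q zw))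
  (HWA : forall zw, W_R R0 alpha zw -> A_p p (fst zw)) :
  forall zw : Cx * Cx, ~ B_f p q R0 alpha zw ->
    exists g : R,
      Un_cv (Gp_seq p delta (fst zw)) g /\
      Un_cv (Gq_seq p q delta zw) (alpha * g) /\
      Un_cv (Gf_seq p q delta zw) (Rmax alpha 1 * g).
Proof.
  intros zw HB.
  destruct (p_est2 p delta Hdelta Hp) as [R1 [HR1 Hpe]].
  pose proof (alpha_ge0 q delta d gamma alpha Hdelta Hd Hq Hdd Halpha) as Ha.
  assert (HD : 2 <= INR delta) by (apply (le_INR 2); lia).
  assert (HDp : forall k, 0 < INR delta ^ k) by (intros; apply pow_lt; lra).
  assert (Hmain : exists g, 0 <= g /\ Un_cv (Gp_seq p delta (fst zw)) g /\
      Un_cv (Gq_seq p q delta zw) (alpha * g)).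
  { destruct (classic (A_f p q R0 alpha zw)) as [[N HN]|HnA].
    - assert (HWk : forall k, W_R R0 alpha (fiter p q (k + N) zw)).
      { induction k. exact HN. simpl. apply HWinv. exact IHk. }
      destruct (HWA _ HN R1) as [N1 HN1]. specialize (HN1 N1 (le_n _)).
      set (M := (N1 + N)%nat). set (zw1 := fiter p q M zw).
      assert (HW1 : forall k, W_R R0 alpha (fiter p q k zw1)).
      { intros k. unfold zw1. rewrite <- fiter_add. replace (k + M)%nat with ((k + N1) + N)%nat by (unfold M; lia). apply HWk. }
      assert (HZ1 : forall k, R1 <= Cnorm (fst (fiter p q k zw1))).
      { intros k. rewrite fst_fiter. unfold zw1, M. rewrite fiter_add, fst_fiter.
        pose proof (escape_iter p R1 HR1 (fun z Hz => proj2 (proj2 (Hpe z Hz))) _ (Rlt_le _ _ HN1) k).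
        pose proof (pow_R1_Rle 2 k ltac:(lra)). nra. }
      destruct (coreW p q delta d gamma alpha R0 R1 Hdelta Hd Hq Hdd Halpha HR HR1 Hpe zw1 HW1 HZ1)
        as [g1 [Hg0 [H1 H2]]].
      exists (g1 / INR delta ^ M). split. apply Rdiv_le_0_compat; auto. split.
      + apply cv_shift with M.
        apply cv_ext with (fun k => / INR delta ^ M * Gp_seq p delta (fst zw1) k).
        { intros k. unfold Gp_seq, zw1. rewrite fst_fiter, <- piter_add, pow_add.
          field. split; apply Rgt_not_eq; apply HDp. }
        replace (g1 / INR delta ^ M) with (/ INR delta ^ M * g1) by (unfold Rdiv; ring).
        apply cv_scal; auto.
      + apply cv_shift with M.
        apply cv_ext with (fun k => / INR delta ^ M * Gq_seq p q delta zw1 k).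
        { intros k. unfold Gq_seq, zw1. rewrite <- fiter_add, pow_add.
          field. split; apply Rgt_not_eq; apply HDp. }
        replace (alpha * (g1 / INR delta ^ M)) with (/ INR delta ^ M * (alpha * g1))
          by (unfold Rdiv; ring).
        apply cv_scal; auto.
    - assert (HnAp : ~ A_p p (fst zw)) by (intros H; apply HB; split; auto).
      pose proof (not_Ap_bounded p R1 HR1 (fun z Hz => proj2 (proj2 (Hpe z Hz))) _ HnAp) as Hb.
      destruct (coreB p q delta d gamma alpha R1 Hdelta Hd Hq Hdd Halpha HR1 zw Hb) as [H1 H2].
      exists 0. split. lra. split. auto. rewrite Rmult_0_r. auto. }
  destruct Hmain as [g [Hg [H1 H2]]]. exists g. split; auto. split; auto.
  apply cv_ext with (fun k => Rmax (Gp_seq p delta (fst zw) k) (Gq_seq p q delta zw k)).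
  { intros k. unfold Gf_seq, Gp_seq, Gq_seq, C2norm. rewrite logp_max by apply Cnorm_ge0.
    rewrite Rmax_div by auto. rewrite fst_fiter. reflexivity. }
  replace (Rmax alpha 1 * g) with (Rmax g (alpha * g)).
  apply cv_max; auto.
  unfold Rmax. repeat destruct Rle_dec; nra.
Qed.
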